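(* Let $T$, $S$, $A$ be closed Hermitian subspaces in $X^2$ with $D(T)=D(S)=:D\subset D(A)$ and $T=S+A$, and assume $\rho(T)\cap\rho(S)\neq\emptyset$. (i) If $A_s$ is $S_s$-compact, then $T$ is a compact perturbation of $S$. (ii) If $T$ is a compact perturbation of $S$, $T(0)^\perp$ reduces both $S$ and $A$, and $T_s$ is a bounded operator on $D$, then $A_s$ is $S_s$-compact.
   Context: $X$ is a complex Hilbert space and $X^2=X\times X$ carries the inner product $\langle (x,f),(y,g)\rangle=\langle x,y\rangle+\langle f,g\rangle$. A subspace $T$ in $X^2$ means a linear subspace of $X^2$ (a linear relation); a linear operator in $X$ is identified with its graph. Notation: $D(T)=\{x:(x,f)\in T \text{ for some } f\}$, $T(x)=\{f:(x,f)\in T\}$, $T^{-1}=\{(f,x):(x,f)\in T\}$, $\lambda I$ is the graph of $x\mapsto \lambda x$, and $T-\lambda I=\{(x,f-\lambda x):(x,f)\in T\}$. The adjoint is $T^*=\{(y,g)\in X^2:\langle g,x\rangle=\langle y,f\rangle \text{ for all }(x,f)\in T\}$; $T$ is Hermitian if $T\subset T^*$. For subspaces $S,A$ in $X^2$, $S+A=\{(x,f+g):(x,f)\in S,(x,g)\in A\}$. For a closed subspace $T$, set $T_\infty=\{(0,g)\in X^2:(0,g)\in T\}$ and $T_s=T\ominus T_\infty$ (orthogonal complement of $T_\infty$ in $T$), so $T=T_s\oplus T_\infty$; $T_s$ is the graph of a linear operator (the operator part of $T$) with $D(T_s)=D(T)$ and $R(T_s)\subset T(0)^\perp$. Resolvent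 set: $\rho(T)=\{\lambda\in\mathbb C:(\lambda I-T)^{-1}$ is a bounded linear operator defined on all of $X\}$. Reducing subspace: a closed subspace $X_1\subset X$ with orthogonal projection $P$ onto it reduces $T$ if $\{(Px,Pf):(x,f)\in T\}\subset T$. For linear operators $U,V$ in $X$ with $D(V)\subset D(U)$: $U$ is $V$-compact if $U|_{D(V)}$ is compact as a map from $(D(V),\|\cdot\|_V)$ into $X$, where $\|x\|_V=\|x\|+\|Vx\|$. Compact perturbation: for closed subspaces $T,S$ in $X^2$ with orthogonal projections $P_T,P_S$ of $X^2$ onto $T$, $S$, $T$ is a compact perturbation of $S$ if $P_T-P_S$ is a compact operator. *)

(* Defs.v *)
From Stdlib Require Import Reals.
Open Scope R_scope.

Definition Cplx : Type := (R * R)%type.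
Definition Cre (z : Cplx) : R := fst z.
Definition Cim (z : Cplx) : R := snd z.
Definition C0 : Cplx := (0, 0).
Definition C1 : Cplx := (1, 0).
Definition Cplus (z w : Cplx) : Cplx := (fst z + fst w, snd z + snd w).
Definition Copp (z : Cplx) : Cplx := (- fst z, - snd z).
Definition Cmult (z w : Cplx) : Cplx :=
  (fst z * fst w - snd z * snd w, fst z * snd w + snd z * fst w).
Definition Cconj (z : Cplx) : Cplx := (fst z, - snd z).

Record Hilbert : Type := {
  H :> Type;
  hadd : H -> H -> H;
  hzero : H;
  hopp : H -> H;
  hscal : Cplx -> H -> H;
  hinner : H -> H -> Cplx;
  hadd_assoc : forall x y z, hadd x (hadd y z) = hadd (hadd x y) z;
  hadd_comm : forall x y, hadd x y = hadd y x;
  hadd_0 : forall x, hadd x hzero = x;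
  hadd_opp : forall x, hadd x (hopp x) = hzero;
  hscal_assoc : forall a b x, hscal a (hscal b x) = hscal (Cmult a b) x;
  hscal_1 : forall x, hscal C1 x = x;
  hscal_distr_v : forall a x y, hscal a (hadd x y) = hadd (hscal a x) (hscal a y);
  hscal_distr_c : forall a b x, hscal (Cplus a b) x = hadd (hscal a x) (hscal b x);
  hinner_add_l : forall x y z, hinner (hadd x y) z = Cplus (hinner x z) (hinner y z);
  hinner_scal_l : forall a x y, hinner (hscal a x) y = Cmult a (hinner x y);
  hinner_conj : forall x y, hinner y x = Cconj (hinner x y);
  hinner_pos : forall x, 0 <= Cre (hinner x x);
  hinner_def : forall x, hinner x x = C0 -> x = hzero;
  hcomplete : forall u : nat -> H,
    (forall eps, eps > 0 -> exists N, forall n m, (n >= N)%nat -> (m >= N)%nat ->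
       sqrt (Cre (hinner (hadd (u n) (hopp (u m))) (hadd (u n) (hopp (u m))))) < eps) ->
    exists l, forall eps, eps > 0 -> exists N, forall n, (n >= N)%nat ->
       sqrt (Cre (hinner (hadd (u n) (hopp l)) (hadd (u n) (hopp l)))) < eps
}.

Arguments hadd {h}. Arguments hzero {h}. Arguments hopp {h}.
Arguments hscal {h}. Arguments hinner {h}.

Section Defs.
Variable X : Hilbert.

Definition hsub (x y : X) : X := hadd x (hopp y).
Definition hnorm (x : X) : R := sqrt (Cre (hinner x x)).

Definition conv (u : nat -> X) (l : X) : Prop :=
  forall eps, eps > 0 -> exists N, forall n, (n >= N)%nat -> hnorm (hsub (u n) l) < eps.

Definition X2 : Type := (X * X)%type.
Definition padd (p q : X2) : X2 := (hadd (fst p) (fst q), hadd (snd p) (snd q)).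
Definition psub (p q : X2) : X2 := (hsub (fst p) (fst q), hsub (snd p) (snd q)).
Definition pinner (p q : X2) : Cplx := Cplus (hinner (fst p) (fst q)) (hinner (snd p) (snd q)).
Definition pnorm (p : X2) : R := sqrt (Cre (pinner p p)).
Definition pconv (u : nat -> X2) (l : X2) : Prop :=
  forall eps, eps > 0 -> exists N, forall n, (n >= N)%nat -> pnorm (psub (u n) l) < eps.

(** A subspace of X^2 (a linear relation), given by its membership predicate:
    [T x f] means (x,f) in T. *)
Definition rel : Type := X -> X -> Prop.

Definition is_subspace (T : rel) : Prop :=
  T hzero hzero /\
  (forall x f y g, T x f -> T y g -> T (hadd x y) (hadd f g)) /\
  (forall a x f, T x f -> T (hscal a x) (hscal a f)).

Definition is_closed (T : rel) : Prop :=
  forall (u : nat -> X2) (l : X2),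
    (forall n, T (fst (u n)) (snd (u n))) -> pconv u l -> T (fst l) (snd l).

Definition closed_subspace (T : rel) : Prop := is_subspace T /\ is_closed T.

Definition dom (T : rel) (x : X) : Prop := exists f, T x f.

Definition adjoint (T : rel) : rel :=
  fun y g => forall x f, T x f -> hinner g x = hinner y f.
Definition hermitian (T : rel) : Prop := forall x f, T x f -> adjoint T x f.

Definition rel_sum (S A : rel) : rel :=
  fun x h => exists f g, S x f /\ A x g /\ h = hadd f g.

Definition rel_eq (T S : rel) : Prop := forall x f, T x f <-> S x f.

(** T_infinity and T_s = T minus-orthogonal T_infinity *)
Definition Tinf (T : rel) : rel := fun x g => x = hzero /\ T hzero g.
Definition Tpart (T : rel) : rel :=
  fun x f => T x f /\ (forall y g, Tinf T y g -> pinner (x, f) (y, g) = C0).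

Definition rel_inv (T : rel) : rel := fun f x => T x f.
Definition lamI_minus (lam : Cplx) (T : rel) : rel :=
  fun x h => exists f, T x f /\ h = hsub (hscal lam x) f.

Definition bounded_operator_on_X (R0 : rel) : Prop :=
  is_subspace R0 /\
  (forall x, exists y, R0 x y) /\
  (forall x y1 y2, R0 x y1 -> R0 x y2 -> y1 = y2) /\
  (exists M, forall x y, R0 x y -> hnorm y <= M * hnorm x).

Definition in_resolvent (lam : Cplx) (T : rel) : Prop :=
  bounded_operator_on_X (rel_inv (lamI_minus lam T)).

Definition orth_of_T0 (T : rel) : X -> Prop :=
  fun x => forall g, T hzero g -> hinner x g = C0.

Definition is_orth_proj (X1 : X -> Prop) (P : X -> X) : Prop :=
  forall x, X1 (P x) /\ (forall y, X1 y -> hinner (hsub x (P x)) y = C0).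

Definition reduces (X1 : X -> Prop) (T : rel) : Prop :=
  exists P, is_orth_proj X1 P /\ (forall x f, T x f -> T (P x) (P f)).

Definition is_orth_proj2 (T : rel) (P : X2 -> X2) : Prop :=
  forall p, T (fst (P p)) (snd (P p)) /\
    (forall q, T (fst q) (snd q) -> pinner (psub p (P p)) q = C0).

Definition compact2 (K : X2 -> X2) : Prop :=
  forall (u : nat -> X2) (M : R), (forall n, pnorm (u n) <= M) ->
    exists (phi : nat -> nat) (l : X2),
      (forall n, (phi n < phi (S n))%nat) /\ pconv (fun n => K (u (phi n))) l.

Definition compact_perturbation (T S : rel) : Prop :=
  exists PT PS, is_orth_proj2 T PT /\ is_orth_proj2 S PS /\
    compact2 (fun p => psub (PT p) (PS p)).

Definition rel_compact (U V : rel) : Prop :=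
  (forall x, dom V x -> dom U x) /\
  forall (x y g : nat -> X) (M : R),
    (forall n, V (x n) (y n)) -> (forall n, U (x n) (g n)) ->
    (forall n, hnorm (x n) + hnorm (y n) <= M) ->
    exists (phi : nat -> nat) (l : X),
      (forall n, (phi n < phi (S n))%nat) /\ conv (fun n => g (phi n)) l.

Definition bounded_on_dom (T : rel) : Prop :=
  exists M, forall x f, T x f -> hnorm f <= M * hnorm x.

End Defs.

Arguments hsub {X}. Arguments hnorm {X}.

(* Main.v *)
Require Import Defs.
From Stdlib Require Import Reals.
From Stdlib Require Import Lra Psatz ClassicalEpsilon Classical Lia.
Import Defs.
Open Scope R_scope.

Arguments hadd_assoc {h}. Arguments hadd_comm {h}. Arguments hadd_0 {h}. Arguments hadd_opp {h}.
Arguments hscal_assoc {h}. Arguments hscal_1 {h}. Arguments hscal_distr_v {h}. Arguments hscal_distr_c {h}.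
Arguments hinner_add_l {h}. Arguments hinner_scal_l {h}. Arguments hinner_conj {h}. Arguments hinner_pos {h}.
Arguments hinner_def {h}. Arguments hcomplete {h}.

Lemma Ceq (z w : Cplx) : fst z = fst w -> snd z = snd w -> z = w.
Proof. destruct z, w; simpl; intros; subst; reflexivity. Qed.

Ltac csolve := unfold Cplus, Copp, Cmult, Cconj, C0, C1, Cre, Cim in *;
  apply Ceq; simpl; ring.

Section G.
Variable Y : Hilbert.
Implicit Types x y z : Y.

Lemma add0l x : hadd hzero x = x.
Proof. rewrite hadd_comm; apply hadd_0. Qed.
Lemma oppl x : hadd (hopp x) x = hzero.
Proof. rewrite hadd_comm; apply hadd_opp. Qed.
Lemma add_cancel_l x y z : hadd x y = hadd x z -> y = z.
Proof.
  intro E. rewrite <- (add0l y), <- (add0l z), <- (oppl x), <- !hadd_assoc, E. reflexivity.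
Qed.
Lemma scal0 x : hscal C0 x = hzero.
Proof.
  apply (add_cancel_l (hscal C0 x)). rewrite hadd_0, <- hscal_distr_c.
  f_equal. csolve.
Qed.
Lemma inner0l y : hinner hzero y = C0.
Proof. rewrite <- (scal0 hzero), hinner_scal_l. csolve. Qed.
Lemma inner_opp_l x y : hinner (hopp x) y = Copp (hinner x y).
Proof.
  assert (E : hopp x = hscal (Copp C1) x).
  { apply (add_cancel_l x). rewrite hadd_opp. rewrite <- (hscal_1 x) at 1.
    rewrite <- hscal_distr_c. rewrite <- (scal0 x). f_equal. csolve. }
  rewrite E, hinner_scal_l. csolve.
Qed.
Lemma inner_sub_l x y z : hinner (hsub x y) z = Cplus (hinner x z) (Copp (hinner y z)).
Proof. unfold hsub. rewrite hinner_add_l, inner_opp_l. reflexivity. Qed.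

Lemma ext x y : (forall q, hinner x q = hinner y q) -> x = y.
Proof.
  intro E. assert (H0 : hsub x y = hzero).
  { apply hinner_def. rewrite inner_sub_l, !E. csolve. }
  unfold hsub in H0. rewrite <- (hadd_0 x), <- (oppl y), hadd_assoc, H0. apply add0l.
Qed.

Lemma inner_add_r x y z : hinner x (hadd y z) = Cplus (hinner x y) (hinner x z).
Proof.
  rewrite (hinner_conj (hadd y z)), hinner_add_l, (hinner_conj y x), (hinner_conj z x).
  destruct (hinner y x), (hinner z x). csolve.
Qed.
Lemma inner_scal_r a x y : hinner x (hscal a y) = Cmult (Cconj a) (hinner x y).
Proof.
  rewrite (hinner_conj (hscal a y)), hinner_scal_l, (hinner_conj y x).
  destruct (hinner y x), a. csolve.
Qed.
Lemma inner0r x : hinner x hzero = C0.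
Proof. rewrite hinner_conj, inner0l. csolve. Qed.
Lemma inner_opp_r x y : hinner x (hopp y) = Copp (hinner x y).
Proof.
  rewrite (hinner_conj (hopp y)), inner_opp_l, (hinner_conj y x).
  destruct (hinner y x). csolve.
Qed.
Lemma inner_sub_r x y z : hinner x (hsub y z) = Cplus (hinner x y) (Copp (hinner x z)).
Proof. unfold hsub. rewrite inner_add_r, inner_opp_r. reflexivity. Qed.

End G.

Ltac vexpand := repeat (rewrite ?hinner_add_l, ?hinner_scal_l, ?inner_opp_l, ?inner_sub_l, ?inner0l).
Ltac vsolve := apply ext; intro; vexpand; csolve.

Section T.
Variable Y : Hilbert.
Lemma test (x y : Y) a : hscal a (hsub x y) = hadd (hscal a x) (hopp (hscal a y)).
Proof. vsolve. Qed.
End T.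


Definition ip {Y : Hilbert} (x y : Y) : R := fst (hinner x y).
Definition rs (t : R) : Cplx := (t, 0).
Definition incr (phi : nat -> nat) := forall n, (phi n < phi (S n))%nat.

Section G2.
Variable Y : Hilbert.
Implicit Types x y z : Y.

Lemma ip_sym x y : ip x y = ip y x.
Proof. unfold ip. rewrite (hinner_conj x y). reflexivity. Qed.
Lemma ip_add_l x y z : ip (hadd x y) z = ip x z + ip y z.
Proof. unfold ip. rewrite hinner_add_l. reflexivity. Qed.
Lemma ip_add_r x y z : ip x (hadd y z) = ip x y + ip x z.
Proof. unfold ip. rewrite inner_add_r. reflexivity. Qed.
Lemma ip_opp_l x y : ip (hopp x) y = - ip x y.
Proof. unfold ip. rewrite inner_opp_l. reflexivity. Qed.
Lemma ip_opp_r x y : ip x (hopp y) = - ip x y.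
Proof. unfold ip. rewrite inner_opp_r. reflexivity. Qed.
Lemma ip_sub_l x y z : ip (hsub x y) z = ip x z - ip y z.
Proof. unfold hsub. rewrite ip_add_l, ip_opp_l. ring. Qed.
Lemma ip_sub_r x y z : ip x (hsub y z) = ip x y - ip x z.
Proof. unfold hsub. rewrite ip_add_r, ip_opp_r. ring. Qed.
Lemma ip0l y : ip hzero y = 0.
Proof. unfold ip. rewrite inner0l. reflexivity. Qed.
Lemma ip0r y : ip y hzero = 0.
Proof. unfold ip. rewrite inner0r. reflexivity. Qed.
Lemma ip_rs_l t x y : ip (hscal (rs t) x) y = t * ip x y.
Proof. unfold ip, rs. rewrite hinner_scal_l. unfold Cmult. simpl. ring. Qed.
Lemma ip_rs_r t x y : ip x (hscal (rs t) y) = t * ip x y.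
Proof. unfold ip, rs. rewrite inner_scal_r. unfold Cmult, Cconj. simpl. ring. Qed.

Lemma ip_pos x : 0 <= ip x x.
Proof. apply hinner_pos. Qed.
Lemma inner_im0 x : snd (hinner x x) = 0.
Proof. pose proof (hinner_conj x x) as E. destruct (hinner x x) as [a b].
  unfold Cconj in E; simpl in *. injection E. lra. Qed.
Lemma ip_eq0 x : ip x x = 0 -> x = hzero.
Proof. intro E. apply hinner_def. apply Ceq. exact E. rewrite inner_im0. reflexivity. Qed.

Lemma hnorm_ip x : hnorm x = sqrt (ip x x).
Proof. reflexivity. Qed.
Lemma norm_ge0 x : 0 <= hnorm x.
Proof. apply sqrt_pos. Qed.
Lemma nsq x : hnorm x * hnorm x = ip x x.
Proof. apply sqrt_sqrt. apply ip_pos. Qed.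
Lemma norm_eq0 x : hnorm x = 0 -> x = hzero.
Proof. intro E. apply ip_eq0. rewrite <- nsq, E. ring. Qed.
Lemma norm0 : hnorm (@hzero Y) = 0.
Proof. rewrite hnorm_ip, ip0l. apply sqrt_0. Qed.
Lemma norm_le_sq x y : ip x x <= ip y y -> hnorm x <= hnorm y.
Proof. intro; apply sqrt_le_1_alt; auto. Qed.
Lemma norm_lt_sq x y : ip x x < ip y y -> hnorm x < hnorm y.
Proof. intro; apply sqrt_lt_1_alt; split; auto. apply ip_pos. Qed.
Lemma norm_sq_le x y : hnorm x <= hnorm y -> ip x x <= ip y y.
Proof. intro. rewrite <- !nsq. pose proof (norm_ge0 x). nra. Qed.

Lemma CS x y : Rabs (ip x y) <= hnorm x * hnorm y.
Proof.
  assert (Q : forall t, 0 <= ip x x + 2 * t * ip x y + t * t * ip y y).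
  { intro t. pose proof (ip_pos (hadd x (hscal (rs t) y))) as P.
    rewrite !ip_add_l, !ip_add_r, !ip_rs_l, !ip_rs_r, (ip_sym y x) in P. lra. }
  assert (B : ip x y * ip x y <= ip x x * ip y y).
  { destruct (Req_dec (ip y y) 0) as [E|E].
    - pose proof (ip_eq0 y E). subst y. rewrite ip0r, ip0l. lra.
    - pose proof (ip_pos y). specialize (Q (- ip x y / ip y y)).
      assert (0 <= ip y y * (ip x x + 2 * (- ip x y / ip y y) * ip x y +
         (- ip x y / ip y y) * (- ip x y / ip y y) * ip y y)) by (apply Rmult_le_pos; lra).
      replace (ip y y * (ip x x + 2 * (- ip x y / ip y y) * ip x y +
         (- ip x y / ip y y) * (- ip x y / ip y y) * ip y y))
        with (ip x x * ip y y - ip x y * ip x y) in H0 by (field; auto). lra. }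
  rewrite <- !nsq in B. pose proof (norm_ge0 x). pose proof (norm_ge0 y).
  assert (P0 : 0 <= hnorm x * hnorm y) by (apply Rmult_le_pos; auto).
  rewrite <- (Rabs_right (hnorm x * hnorm y)) by lra. apply Rsqr_le_abs_0.
  unfold Rsqr. nra.
Qed.
Lemma CS' x y : ip x y <= hnorm x * hnorm y.
Proof. pose proof (CS x y). pose proof (Rle_abs (ip x y)). lra. Qed.

Lemma tri x y : hnorm (hadd x y) <= hnorm x + hnorm y.
Proof.
  assert (H0 : ip (hadd x y) (hadd x y) <= (hnorm x + hnorm y) * (hnorm x + hnorm y)).
  { rewrite !ip_add_l, !ip_add_r, (ip_sym y x). pose proof (CS' x y). rewrite <- !nsq. nra. }
  rewrite <- nsq in H0. pose proof (norm_ge0 (hadd x y)). pose proof (norm_ge0 x).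
  pose proof (norm_ge0 y). nra.
Qed.
Lemma norm_opp x : hnorm (hopp x) = hnorm x.
Proof. rewrite !hnorm_ip, ip_opp_l, ip_opp_r. f_equal; ring. Qed.
Lemma tri_sub x y : hnorm (hsub x y) <= hnorm x + hnorm y.
Proof. unfold hsub. rewrite <- (norm_opp y). apply tri. Qed.
Lemma norm_sub_sym x y : hnorm (hsub x y) = hnorm (hsub y x).
Proof. replace (hsub x y) with (hopp (hsub y x)) by vsolve. apply norm_opp. Qed.
Lemma norm_rs t x : hnorm (hscal (rs t) x) = Rabs t * hnorm x.
Proof.
  rewrite !hnorm_ip, ip_rs_l, ip_rs_r, <- Rmult_assoc.
  rewrite sqrt_mult_alt by (pose proof (Rle_0_sqr t); unfold Rsqr in *; lra).
  change (t * t) with (Rsqr t). rewrite sqrt_Rsqr_abs. reflexivity.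
Qed.
End G2.


Lemma seq_choice {A : Type} (P : nat -> A -> Prop) :
  (forall n, exists y, P n y) -> exists f : nat -> A, forall n, P n (f n).
Proof.
  intro H. exists (fun n => proj1_sig (constructive_indefinite_description _ (H n))).
  intro n. exact (proj2_sig (constructive_indefinite_description _ (H n))).
Qed.

Lemma incr_mono phi : incr phi -> forall a b, (a < b)%nat -> (phi a < phi b)%nat.
Proof.
  intros H a b Hab. induction Hab. apply H. specialize (H m). lia.
Qed.
Lemma incr_ge phi : incr phi -> forall n, (n <= phi n)%nat.
Proof. intros H n. induction n. lia. specialize (H n). lia. Qed.
Lemma incr_comp phi psi : incr phi -> incr psi -> incr (fun n => phi (psi n)).
Proof. intros H1 H2 n. apply incr_mono; auto. Qed.

Lemma conv_subseq (Y : Hilbert) (u : nat -> Y) l phi :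
  incr phi -> conv Y u l -> conv Y (fun n => u (phi n)) l.
Proof.
  intros Hp Hc eps He. destruct (Hc eps He) as [N HN]. exists N. intros n Hn.
  apply HN. pose proof (incr_ge phi Hp n). lia.
Qed.

Lemma conv_lip (Y Z : Hilbert) (F : Y -> Z) K u l :
  0 <= K -> (forall a b, hnorm (hsub (F a) (F b)) <= K * hnorm (hsub a b)) ->
  conv Y u l -> conv Z (fun n => F (u n)) (F l).
Proof.
  intros HK HF Hc eps He. destruct (Hc (eps / (K + 1))) as [N HN].
  { apply Rdiv_lt_0_compat; lra. }
  exists N. intros n Hn. specialize (HN n Hn). eapply Rle_lt_trans. apply HF.
  apply Rle_lt_trans with ((K+1) * hnorm (hsub (u n) l)).
  pose proof (norm_ge0 _ (hsub (u n) l)). nra.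
  replace eps with ((K+1) * (eps / (K+1))) by (field; lra).
  apply Rmult_lt_compat_l; lra.
Qed.

Lemma conv_sub (Y : Hilbert) (u v : nat -> Y) l m :
  conv Y u l -> conv Y v m -> conv Y (fun n => hsub (u n) (v n)) (hsub l m).
Proof.
  intros Hu Hv eps He. destruct (Hu (eps/2)) as [N1 H1]; [lra|].
  destruct (Hv (eps/2)) as [N2 H2]; [lra|]. exists (max N1 N2). intros n Hn.
  replace (hsub (hsub (u n) (v n)) (hsub l m)) with (hsub (hsub (u n) l) (hsub (v n) m)) by vsolve.
  eapply Rle_lt_trans. apply tri_sub.
  specialize (H1 n ltac:(lia)). specialize (H2 n ltac:(lia)). lra.
Qed.

Lemma conv_small0 (Y : Hilbert) (u : nat -> Y) :
  (forall n, hnorm (u n) <= / (INR n + 1)) -> conv Y u hzero.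
Proof.
  intros H eps He. destruct (archimed (/ eps)) as [A _].
  assert (0 <= IZR (up (/ eps))).
  { pose proof (Rinv_0_lt_compat eps He). lra. }
  exists (Z.to_nat (up (/ eps))). intros n Hn.
  replace (hsub (u n) hzero) with (u n) by vsolve.
  eapply Rle_lt_trans. apply H.
  assert (INR n >= IZR (up (/eps))).
  { rewrite INR_IZR_INZ. apply Rle_ge. apply IZR_le.
    apply le_IZR in H0. lia. }
  assert (/ eps < INR n + 1) by lra.
  replace eps with (/ / eps) by (field; lra).
  apply Rinv_lt_contravar. apply Rmult_lt_0_compat. apply Rinv_0_lt_compat; lra.
  pose proof (pos_INR n); lra. lra.
Qed.

Lemma cauchy_conv (Y : Hilbert) (u : nat -> Y) :
  (forall eps, eps > 0 -> exists N, forall n m, (n >= N)%nat -> (m >= N)%nat ->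
     hnorm (hsub (u n) (u m)) < eps) -> exists l, conv Y u l.
Proof. intro H. apply (hcomplete u H). Qed.

Lemma conv_cauchy (Y : Hilbert) (u : nat -> Y) l : conv Y u l ->
  forall eps, eps > 0 -> exists N, forall n m, (n >= N)%nat -> (m >= N)%nat ->
     hnorm (hsub (u n) (u m)) < eps.
Proof.
  intros H eps He. destruct (H (eps/2)) as [N HN]; [lra|]. exists N. intros n m Hn Hm.
  replace (hsub (u n) (u m)) with (hsub (hsub (u n) l) (hsub (u m) l)) by vsolve.
  eapply Rle_lt_trans. apply tri_sub. pose proof (HN n Hn). pose proof (HN m Hm). lra.
Qed.


Lemma fun_choice {A B : Type} (P : A -> B -> Prop) :
  (forall a, exists b, P a b) -> exists f : A -> B, forall a, P a (f a).
Proof.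
  intro H. exists (fun a => proj1_sig (constructive_indefinite_description _ (H a))).
  intro a. exact (proj2_sig (constructive_indefinite_description _ (H a))).
Qed.

Lemma small_inv d : d > 0 -> exists N, forall n, (n >= N)%nat -> / (INR n + 1) < d.
Proof.
  intros He. destruct (archimed (/ d)) as [A _].
  assert (0 <= IZR (up (/ d))).
  { pose proof (Rinv_0_lt_compat d He). lra. }
  exists (Z.to_nat (up (/ d))). intros n Hn.
  assert (INR n >= IZR (up (/d))).
  { rewrite INR_IZR_INZ. apply Rle_ge. apply IZR_le.
    apply le_IZR in H. lia. }
  replace d with (/ / d) by (field; lra).
  apply Rinv_lt_contravar. apply Rmult_lt_0_compat. apply Rinv_0_lt_compat; lra.
  pose proof (pos_INR n); lra. lra.
Qed.

Lemma le_eps x d : (forall eps, eps > 0 -> x < d + eps) -> x <= d.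
Proof. intro H. destruct (Rle_lt_dec x d); auto. specialize (H ((x - d)/2)). lra. Qed.

Lemma quad0 B Q : 0 <= Q -> (forall t, 0 <= - 2 * t * B + t * t * Q) -> B = 0.
Proof.
  intros HQ H. specialize (H (B / (Q + 1))).
  assert (0 <= (Q+1)*(Q+1) * (- 2 * (B / (Q + 1)) * B + B / (Q + 1) * (B / (Q + 1)) * Q))
    by (apply Rmult_le_pos; nra).
  replace ((Q+1)*(Q+1) * (- 2 * (B / (Q + 1)) * B + B / (Q + 1) * (B / (Q + 1)) * Q))
    with (- (B * B) * (Q + 2)) in H0 by (field; lra).
  nra.
Qed.

Section P.
Variable Y : Hilbert.
Implicit Types x y z p q c : Y.

Definition gsub (C : Y -> Prop) := C hzero /\ (forall x y, C x -> C y -> C (hadd x y)) /\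
  (forall a x, C x -> C (hscal a x)).
Definition gclosed (C : Y -> Prop) := forall u l, (forall n : nat, C (u n)) -> conv Y u l -> C l.
Definition gproj (C : Y -> Prop) (P : Y -> Y) :=
  forall p, C (P p) /\ (forall q, C q -> hinner (hsub p (P p)) q = C0).

Lemma sub_eq0 x y : hsub x y = hzero -> x = y.
Proof. intro E. apply ext. intro q. assert (hinner (hsub x y) q = C0) by (rewrite E; apply inner0l).
  rewrite inner_sub_l in H. destruct (hinner x q), (hinner y q). unfold Cplus, Copp, C0 in H.
  injection H; intros. apply Ceq; simpl; lra. Qed.

Lemma gsub_sub C x y : gsub C -> C x -> C y -> C (hsub x y).
Proof. intros [H0 [Ha Hs]] Hx Hy. replace (hsub x y) with (hadd x (hscal (Copp C1) y)) by vsolve.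
  auto. Qed.

Lemma proj_point C : gsub C -> gclosed C -> forall p, exists c, C c /\
  forall q, C q -> hinner (hsub p c) q = C0.
Proof.
  intros HC Hcl p. pose proof HC as [HC0 [HCa HCs]].
  set (E := fun r => exists c, C c /\ r = - hnorm (hsub p c)).
  destruct (completeness E) as [m [Hub Hlub]].
  { exists 0. intros r [c [_ ->]]. pose proof (norm_ge0 _ (hsub p c)). lra. }
  { exists (- hnorm (hsub p hzero)). exists hzero. auto. }
  set (d := - m).
  assert (Dlow : forall c, C c -> d <= hnorm (hsub p c)).
  { intros c Hc. assert (E (- hnorm (hsub p c))) by (exists c; auto). specialize (Hub _ H). unfold d. lra. }
  assert (Dapp : forall eps, eps > 0 -> exists c, C c /\ hnorm (hsub p c) < d + eps).
  { intros eps He. apply NNPP. intro N.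
    assert (is_upper_bound E (m - eps)).
    { intros r [c [Hc ->]]. destruct (Rlt_le_dec (hnorm (hsub p c)) (d + eps)).
      exfalso; apply N; eauto. unfold d in r. lra. }
    specialize (Hlub _ H). lra. }
  assert (Dpos : 0 <= d).
  { assert (is_upper_bound E 0).
    { intros r [c [_ ->]]. pose proof (norm_ge0 _ (hsub p c)). lra. }
    specialize (Hlub _ H). unfold d. lra. }
  destruct (seq_choice (fun n c => C c /\ hnorm (hsub p c) < d + / (INR n + 1))) as [cs Hcs].
  { intro n. apply Dapp. apply Rinv_0_lt_compat. pose proof (pos_INR n). lra. }
  assert (Par : forall a b, ip (hsub a b) (hsub a b) =
     2 * ip (hsub p a) (hsub p a) + 2 * ip (hsub p b) (hsub p b) -
     4 * ip (hsub p (hscal (rs (/2)) (hadd a b))) (hsub p (hscal (rs (/2)) (hadd a b)))).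
  { intros a b. rewrite !ip_sub_l, !ip_sub_r, !ip_rs_l, !ip_rs_r, !ip_add_l, !ip_add_r.
    rewrite (ip_sym _ a p), (ip_sym _ b p), (ip_sym _ b a). field. }
  assert (Cau : forall eps, eps > 0 -> exists N, forall n m, (n >= N)%nat -> (m >= N)%nat ->
     hnorm (hsub (cs n) (cs m)) < eps).
  { intros eps He. destruct (small_inv (Rmin 1 (eps * eps / (8 * d + 4)))) as [N HN].
    { apply Rmin_pos. lra. apply Rdiv_lt_0_compat; nra. }
    exists N. intros n k Hn Hk.
    set (dl := Rmin 1 (eps * eps / (8 * d + 4))) in *.
    assert (dl1 : dl <= 1) by apply Rmin_l.
    assert (dl2 : dl <= eps * eps / (8 * d + 4)) by apply Rmin_r.
    assert (dl3 : (8 * d + 4) * dl <= eps * eps).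
    { apply Rmult_le_compat_l with (r := 8 * d + 4) in dl2; [|lra].
      replace ((8 * d + 4) * (eps * eps / (8 * d + 4))) with (eps * eps) in dl2 by (field; lra). lra. }
    pose proof (HN n Hn) as En. pose proof (HN k Hk) as Ek.
    assert (en0 : 0 < / (INR n + 1)) by (apply Rinv_0_lt_compat; pose proof (pos_INR n); lra).
    assert (ek0 : 0 < / (INR k + 1)) by (apply Rinv_0_lt_compat; pose proof (pos_INR k); lra).
    destruct (Hcs n) as [Cn An]. destruct (Hcs k) as [Ck Ak].
    pose proof (Dlow _ Cn) as Ln. pose proof (Dlow _ Ck) as Lk.
    assert (Cw : C (hscal (rs (/2)) (hadd (cs n) (cs k)))) by auto.
    pose proof (Dlow _ Cw) as Lw.
    set (w := hscal (rs (/2)) (hadd (cs n) (cs k))) in *.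
    specialize (Par (cs n) (cs k)). fold w in Par.
    rewrite <- !nsq in Par.
    set (en := / (INR n + 1)) in *. set (ek := / (INR k + 1)) in *.
    set (Nn := hnorm (hsub p (cs n))) in *. set (Nk := hnorm (hsub p (cs k))) in *.
    set (Nw := hnorm (hsub p w)) in *. set (V := hnorm (hsub (cs n) (cs k))) in *.
    assert (V0 : 0 <= V) by apply norm_ge0.
    assert (V * V < eps * eps).
    { rewrite Par.
      assert (Nn * Nn < (d + en) * (d + en)) by nra.
      assert (Nk * Nk < (d + ek) * (d + ek)) by nra.
      assert (d * d <= Nw * Nw) by nra.
      assert (en * en <= en) by nra. assert (ek * ek <= ek) by nra.
      nra. }
    nra. }
  destruct (cauchy_conv _ cs Cau) as [c Hc].
  assert (Cc : C c) by (apply (Hcl cs); auto; intro n; apply Hcs).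
  assert (Hd : hnorm (hsub p c) <= d).
  { apply le_eps. intros eps He.
    destruct (Hc (eps/2)) as [N1 H1]; [lra|].
    destruct (small_inv (eps/2)) as [N2 H2]; [lra|].
    set (n := max N1 N2). specialize (H1 n ltac:(lia)). specialize (H2 n ltac:(lia)).
    destruct (Hcs n) as [_ Hn].
    replace (hsub p c) with (hadd (hsub p (cs n)) (hsub (cs n) c)) by vsolve.
    eapply Rle_lt_trans. apply tri. lra. }
  exists c. split; auto.
  intros q Cq.
  assert (Re : forall q, C q -> ip (hsub p c) q = 0).
  { intros q' Cq'. apply (quad0 _ (ip q' q')). apply ip_pos. intro t.
    assert (C (hadd c (hscal (rs t) q'))) by auto.
    pose proof (Dlow _ H). pose proof (norm_ge0 _ (hsub p c)).
    assert (ip (hsub p c) (hsub p c) <= ip (hsub p (hadd c (hscal (rs t) q')))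
              (hsub p (hadd c (hscal (rs t) q')))) by (apply norm_sq_le; lra).
    replace (hsub p (hadd c (hscal (rs t) q'))) with (hsub (hsub p c) (hscal (rs t) q')) in H2 by vsolve.
    remember (hsub p c) as r. clear Heqr.
    rewrite !ip_sub_l, !ip_sub_r, !ip_rs_l, !ip_rs_r, (ip_sym _ q' r) in H2.
    lra. }
  apply Ceq.
  - apply Re; auto.
  - pose proof (Re (hscal (0,1) q) (HCs _ _ Cq)) as E'. unfold ip in E'.
    rewrite inner_scal_r in E'. destruct (hinner (hsub p c) q) as [a b].
    unfold Cmult, Cconj in E'. simpl in *. lra.
Qed.

Lemma proj_exists C : gsub C -> gclosed C -> exists P, gproj C P.
Proof.
  intros HC Hcl. destruct (fun_choice _ (proj_point C HC Hcl)) as [P HP].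
  exists P. exact HP.
Qed.

End P.


Section PP.
Set Default Proof Using "All".
Variable Y : Hilbert.
Variable C : Y -> Prop.
Variable P : Y -> Y.
Hypothesis HC : gsub Y C.
Hypothesis HP : gproj Y C P.
Implicit Types x y z p q c : Y.

Lemma pj_in p : C (P p). Proof. apply HP. Qed.
Lemma pj_orth p q : C q -> hinner (hsub p (P p)) q = C0. Proof. apply HP. Qed.

Lemma pj_char p c : C c -> (forall q, C q -> hinner (hsub p c) q = C0) -> c = P p.
Proof.
  intros Cc Hc. set (d := hsub (P p) c).
  assert (Cd : C d) by (apply gsub_sub; auto; apply pj_in).
  assert (hinner d d = C0).
  { assert (E : hinner d d = Cplus (hinner (hsub p c) d) (Copp (hinner (hsub p (P p)) d))).
    { unfold d at 1. rewrite !inner_sub_l. destruct (hinner p d), (hinner c d), (hinner (P p) d). csolve. }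
    rewrite E, Hc, pj_orth; auto. csolve. }
  symmetry. apply sub_eq0. apply hinner_def. exact H.
Qed.

Lemma pj_fix c : C c -> P c = c.
Proof. intro Cc. symmetry. apply pj_char; auto. intros q _.
  replace (hsub c c) with (@hzero Y) by vsolve. apply inner0l. Qed.

Lemma pj_add p q : P (hadd p q) = hadd (P p) (P q).
Proof.
  symmetry. apply pj_char. destruct HC as [_ [Ha _]]. apply Ha; apply pj_in.
  intros r Cr. replace (hsub (hadd p q) (hadd (P p) (P q))) with
    (hadd (hsub p (P p)) (hsub q (P q))) by vsolve.
  rewrite hinner_add_l, !pj_orth; auto. csolve.
Qed.
Lemma pj_scal a p : P (hscal a p) = hscal a (P p).
Proof.
  symmetry. apply pj_char. destruct HC as [_ [_ Hs]]. apply Hs; apply pj_in.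
  intros r Cr. replace (hsub (hscal a p) (hscal a (P p))) with (hscal a (hsub p (P p))) by vsolve.
  rewrite hinner_scal_l, !pj_orth; auto. csolve.
Qed.
Lemma pj_sub p q : P (hsub p q) = hsub (P p) (P q).
Proof.
  replace (hsub p q) with (hadd p (hscal (Copp C1) q)) by vsolve.
  rewrite pj_add, pj_scal. vsolve.
Qed.
Lemma pj_zero : P hzero = hzero.
Proof. apply pj_fix. apply HC. Qed.

Lemma pj_ip p : ip (hsub p (P p)) (P p) = 0.
Proof. unfold ip. rewrite pj_orth. reflexivity. apply pj_in. Qed.

Lemma pj_pyth p : ip p p = ip (P p) (P p) + ip (hsub p (P p)) (hsub p (P p)).
Proof.
  pose proof (pj_ip p). remember (hsub p (P p)) as r.
  replace p with (hadd (P p) r) at 1 2 by (subst; vsolve).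
  rewrite !ip_add_l, !ip_add_r, (ip_sym _ (P p) r). lra.
Qed.
Lemma pj_norm p : hnorm (P p) <= hnorm p.
Proof. apply norm_le_sq. rewrite (pj_pyth p). pose proof (ip_pos _ (hsub p (P p))). lra. Qed.
Lemma cpj_norm p : hnorm (hsub p (P p)) <= hnorm p.
Proof. apply norm_le_sq. rewrite (pj_pyth p). pose proof (ip_pos _ (P p)). lra. Qed.
Lemma pj_lip a b : hnorm (hsub (P a) (P b)) <= 1 * hnorm (hsub a b).
Proof. rewrite <- pj_sub. rewrite Rmult_1_l. apply pj_norm. Qed.
Lemma cpj_sub a b : hsub (hsub a (P a)) (hsub b (P b)) = hsub (hsub a b) (P (hsub a b)).
Proof. rewrite pj_sub. vsolve. Qed.
Lemma cpj_lip a b : hnorm (hsub (hsub a (P a)) (hsub b (P b))) <= 1 * hnorm (hsub a b).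
Proof. rewrite cpj_sub, Rmult_1_l. apply cpj_norm. Qed.
Lemma cpj_fix c : C c -> hsub c (P c) = hzero.
Proof. intro. rewrite pj_fix; auto. vsolve. Qed.
Lemma pj_ip2 p : ip (P p) p = ip (P p) (P p).
Proof. pose proof (pj_ip p). rewrite ip_sub_l in H. rewrite ip_sym. lra. Qed.

End PP.


Definition gcompact (Y : Hilbert) (K : Y -> Y) : Prop :=
  forall (u : nat -> Y) (M : R), (forall n, hnorm (u n) <= M) ->
    exists (phi : nat -> nat) (l : Y), incr phi /\ conv Y (fun n => K (u (phi n))) l.

Lemma gc_ext (Y : Hilbert) (K1 K2 : Y -> Y) : (forall p, K1 p = K2 p) -> gcompact Y K1 -> gcompact Y K2.
Proof.
  intros E H u M Hu. destruct (H u M Hu) as [phi [l [Hp Hc]]]. exists phi, l. split; auto.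
  intros eps He. destruct (Hc eps He) as [N HN]. exists N. intros. rewrite <- E. auto.
Qed.

Lemma gc_sub (Y : Hilbert) (K1 K2 : Y -> Y) : gcompact Y K1 -> gcompact Y K2 ->
  gcompact Y (fun p => hsub (K1 p) (K2 p)).
Proof.
  intros H1 H2 u M Hu. destruct (H1 u M Hu) as [phi [l [Hp Hc]]].
  destruct (H2 (fun n => u (phi n)) M (fun n => Hu (phi n))) as [psi [m [Hq Hd]]].
  exists (fun n => phi (psi n)), (hsub l m). split. apply incr_comp; auto.
  apply conv_sub; auto. apply (conv_subseq _ (fun n => K1 (u (phi n)))); auto.
Qed.

Lemma Ltrick (Y : Hilbert) C1 P C2 Q : gsub Y C1 -> gproj Y C1 P -> gsub Y C2 -> gproj Y C2 Q ->
  gcompact Y (fun p => hsub (Q p) (P (Q p))) -> gcompact Y (fun p => Q (hsub p (P p))).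
Proof.
  intros HC1 HP HC2 HQ HK u B Hu.
  assert (B0 : 0 <= B) by (eapply Rle_trans; [apply norm_ge0|apply (Hu 0%nat)]).
  set (v := fun n => hsub (u n) (P (u n))).
  assert (Hv : forall n, hnorm (v n) <= B).
  { intro n. eapply Rle_trans. apply (cpj_norm _ C1 P HC1 HP). apply Hu. }
  destruct (HK v B Hv) as [phi [l [Hp Hc]]].
  set (K := fun p => hsub (Q p) (P (Q p))) in *.
  assert (Klin : forall a b, K (hsub a b) = hsub (K a) (K b)).
  { intros a b. unfold K. rewrite (pj_sub _ C2 Q HC2 HQ), (pj_sub _ C1 P HC1 HP). vsolve. }
  assert (Key : forall a b, let d := hsub (v a) (v b) in
      ip (Q d) (Q d) <= hnorm (K d) * (2 * B)).
  { intros a b d.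
    assert (E1 : ip (Q d) (Q d) = ip (K d) d).
    { unfold K. rewrite ip_sub_l. rewrite <- (pj_ip2 _ C2 Q HC2 HQ d).
      assert (ip (P (Q d)) d = 0).
      { unfold d, v. rewrite ip_sub_r. rewrite !(ip_sym _ (P (Q d))).
        unfold ip. rewrite !(pj_orth _ C1 P HC1 HP) by (apply (pj_in _ C1 P HC1 HP)). simpl. ring. }
      lra. }
    rewrite E1. eapply Rle_trans. apply CS'.
    apply Rmult_le_compat_l. apply norm_ge0. unfold d. eapply Rle_trans. apply tri_sub.
    pose proof (Hv a). pose proof (Hv b). lra. }
  destruct (cauchy_conv _ (fun n => Q (v (phi n)))) as [l' Hl'].
  { intros eps He. destruct (conv_cauchy _ _ _ Hc (eps * eps / (2 * B + 1))) as [N HN].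
    { apply Rdiv_lt_0_compat; nra. }
    exists N. intros n m Hn Hm. specialize (HN n m Hn Hm). simpl in HN.
    assert (HN' : hnorm (K (hsub (v (phi n)) (v (phi m)))) < eps * eps / (2 * B + 1))
      by (rewrite Klin; exact HN). clear HN. rename HN' into HN. specialize (Key (phi n) (phi m)). simpl in Key.
    rewrite <- (pj_sub _ C2 Q HC2 HQ). rewrite <- nsq in Key.
    set (a := hnorm (Q (hsub (v (phi n)) (v (phi m))))) in *.
    set (k := hnorm (K (hsub (v (phi n)) (v (phi m))))) in *.
    assert (0 <= a) by apply norm_ge0.
    assert (k * (2 * B) <= eps * eps / (2 * B + 1) * (2 * B)) by (apply Rmult_le_compat_r; lra).
    assert (eps * eps / (2 * B + 1) * (2 * B) < eps * eps).
    { replace (eps * eps / (2 * B + 1) * (2 * B)) with (eps * eps * (2 * B / (2 * B + 1))) by (field; lra).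
      assert (2 * B / (2 * B + 1) < 1). { apply (Rmult_lt_reg_r (2 * B + 1)). lra.
        replace (2 * B / (2 * B + 1) * (2 * B + 1)) with (2 * B) by (field; lra). lra. }
      assert (0 < eps * eps) by (apply Rmult_lt_0_compat; lra).
      rewrite <- (Rmult_1_r (eps * eps)) at 2. apply Rmult_lt_compat_l; lra. }
    nra. }
  exists phi, l'. split; auto.
Qed.


Section X2S.
Variable X : Hilbert.
Definition padd2 (p q : X * X) : X * X := (hadd (fst p) (fst q), hadd (snd p) (snd q)).
Definition popp2 (p : X * X) : X * X := (hopp (fst p), hopp (snd p)).
Definition pscal2 (a : Cplx) (p : X * X) : X * X := (hscal a (fst p), hscal a (snd p)).
Definition pin2 (p q : X * X) : Cplx := Cplus (hinner (fst p) (fst q)) (hinner (snd p) (snd q)).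
Definition pz2 : X * X := (hzero, hzero).

Lemma pnorm_ge_fst (p : X * X) : hnorm (fst p) <= sqrt (fst (pin2 p p)).
Proof. unfold hnorm, pin2, Cplus, Cre. simpl. apply sqrt_le_1_alt.
  pose proof (ip_pos _ (snd p)). unfold ip in H. lra. Qed.
Lemma pnorm_ge_snd (p : X * X) : hnorm (snd p) <= sqrt (fst (pin2 p p)).
Proof. unfold hnorm, pin2, Cplus, Cre. simpl. apply sqrt_le_1_alt.
  pose proof (ip_pos _ (fst p)). unfold ip in H. lra. Qed.
Lemma pnorm_le_sum (p : X * X) : sqrt (fst (pin2 p p)) <= hnorm (fst p) + hnorm (snd p).
Proof.
  unfold pin2, Cplus. simpl. fold (ip (fst p) (fst p)). fold (ip (snd p) (snd p)).
  rewrite <- !nsq. pose proof (norm_ge0 _ (fst p)). pose proof (norm_ge0 _ (snd p)).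
  rewrite <- (sqrt_square (hnorm (fst p) + hnorm (snd p))) by lra.
  apply sqrt_le_1_alt. nra.
Qed.

Lemma X2_complete : forall u : nat -> X * X,
    (forall eps, eps > 0 -> exists N, forall n m, (n >= N)%nat -> (m >= N)%nat ->
       sqrt (Cre (pin2 (padd2 (u n) (popp2 (u m))) (padd2 (u n) (popp2 (u m))))) < eps) ->
    exists l, forall eps, eps > 0 -> exists N, forall n, (n >= N)%nat ->
       sqrt (Cre (pin2 (padd2 (u n) (popp2 l)) (padd2 (u n) (popp2 l)))) < eps.
Proof.
  intros u Hu.
  destruct (cauchy_conv X (fun n => fst (u n))) as [l1 H1].
  { intros eps He. destruct (Hu eps He) as [N HN]. exists N. intros n m Hn Hm.
    eapply Rle_lt_trans. 2: apply (HN n m Hn Hm). apply (pnorm_ge_fst (padd2 (u n) (popp2 (u m)))). }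
  destruct (cauchy_conv X (fun n => snd (u n))) as [l2 H2].
  { intros eps He. destruct (Hu eps He) as [N HN]. exists N. intros n m Hn Hm.
    eapply Rle_lt_trans. 2: apply (HN n m Hn Hm). apply (pnorm_ge_snd (padd2 (u n) (popp2 (u m)))). }
  exists (l1, l2). intros eps He.
  destruct (H1 (eps/2)) as [N1 K1]; [lra|]. destruct (H2 (eps/2)) as [N2 K2]; [lra|].
  exists (max N1 N2). intros n Hn. eapply Rle_lt_trans. apply pnorm_le_sum.
  simpl. specialize (K1 n ltac:(lia)). specialize (K2 n ltac:(lia)). unfold hsub in *. lra.
Qed.

Definition X2H : Hilbert.
Proof.
  refine {| H := X * X; hadd := padd2; hzero := pz2; hopp := popp2; hscal := pscal2;
            hinner := pin2; hcomplete := X2_complete |};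
  unfold padd2, popp2, pscal2, pin2, pz2; intros; simpl.
  - rewrite hadd_assoc, hadd_assoc. reflexivity.
  - rewrite (hadd_comm (fst x)), (hadd_comm (snd x)). reflexivity.
  - rewrite !hadd_0. destruct x; reflexivity.
  - rewrite !hadd_opp. reflexivity.
  - rewrite !hscal_assoc. reflexivity.
  - rewrite !hscal_1. destruct x; reflexivity.
  - rewrite !hscal_distr_v. reflexivity.
  - rewrite !hscal_distr_c. reflexivity.
  - rewrite !hinner_add_l. destruct (hinner (fst x) (fst z)), (hinner (fst y) (fst z)),
      (hinner (snd x) (snd z)), (hinner (snd y) (snd z)). csolve.
  - rewrite !hinner_scal_l. destruct (hinner (fst x) (fst y)), (hinner (snd x) (snd y)), a. csolve.
  - rewrite (hinner_conj (fst x)), (hinner_conj (snd x)).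
    destruct (hinner (fst x) (fst y)), (hinner (snd x) (snd y)). csolve.
  - pose proof (ip_pos _ (fst x)). pose proof (ip_pos _ (snd x)). unfold ip in *.
    unfold Cre, Cplus. simpl. lra.
  - rename H into H0. pose proof (ip_pos _ (fst x)) as P1. pose proof (ip_pos _ (snd x)) as P2.
    pose proof (inner_im0 _ (fst x)) as I1. pose proof (inner_im0 _ (snd x)) as I2.
    unfold ip in *. unfold Cplus, C0 in H0. injection H0; intros.
    assert (fst x = hzero). { apply ip_eq0. unfold ip. lra. }
    assert (snd x = hzero). { apply ip_eq0. unfold ip. lra. }
    destruct x; simpl in *; subst; reflexivity.
Defined.

Lemma X2_norm_pnorm (p : X * X) : @hnorm X2H p = pnorm X p.
Proof. reflexivity. Qed.
Lemma X2_conv (u : nat -> X * X) l : conv X2H u l <-> pconv X u l.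
Proof. split; intro H; exact H. Qed.
Lemma X2_proj T P : is_orth_proj2 X T P <-> gproj X2H (fun p => T (fst p) (snd p)) P.
Proof. split; intro H; exact H. Qed.
Lemma X2_compact K : compact2 X K <-> gcompact X2H K.
Proof. split; intro H; exact H. Qed.
Lemma X_proj (X1 : X -> Prop) P : is_orth_proj X X1 P <-> gproj X X1 P.
Proof. split; intro H; exact H. Qed.
End X2S.


Section RelL.
Variable X : Hilbert.
Implicit Types R : rel X.

Lemma rs_sub R x f y g : is_subspace X R -> R x f -> R y g -> R (hsub x y) (hsub f g).
Proof. intros [H0 [Ha Hs]] H1 H2. replace (hsub x y) with (hadd x (hscal (Copp C1) y)) by vsolve.
  replace (hsub f g) with (hadd f (hscal (Copp C1) g)) by vsolve. auto. Qed.
Lemma rs_add R x f y g : is_subspace X R -> R x f -> R y g -> R (hadd x y) (hadd f g).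
Proof. intros [H0 [Ha Hs]]. auto. Qed.
Lemma rs_scal R a x f : is_subspace X R -> R x f -> R (hscal a x) (hscal a f).
Proof. intros [H0 [Ha Hs]]. auto. Qed.
Lemma rs_0 R : is_subspace X R -> R hzero hzero.
Proof. intros [H0 _]. auto. Qed.

Lemma Tpart_orth R x f m : Tpart X R x f -> R hzero m -> hinner f m = C0.
Proof. intros [_ Ho] Hm. specialize (Ho hzero m (conj eq_refl Hm)). unfold pinner in Ho.
  simpl in Ho. rewrite inner0r in Ho. destruct (hinner f m). unfold Cplus, C0 in *.
  injection Ho; intros. apply Ceq; simpl; lra. Qed.
Lemma Tpart_in R x f : Tpart X R x f -> R x f.
Proof. intros [H _]. auto. Qed.
Lemma Tpart_scal R a x f : is_subspace X R -> Tpart X R x f -> Tpart X R (hscal a x) (hscal a f).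
Proof. intros HR HT. split. apply rs_scal; auto. apply HT.
  intros y g [-> Hg]. unfold pinner; simpl. rewrite inner0r, hinner_scal_l.
  rewrite (Tpart_orth R x f g HT Hg). csolve. Qed.

Lemma gsub0 R : is_subspace X R -> gsub X (fun g => R hzero g).
Proof. intros [H0 [Ha Hs]]. split; [auto|split].
  - intros x y Hx Hy. rewrite <- (hadd_0 hzero). auto.
  - intros a x Hx. assert (E : hscal a (@hzero X) = hzero) by vsolve. rewrite <- E at 1. auto.
Qed.
Lemma gclosed0 R : is_closed X R -> gclosed X (fun g => R hzero g).
Proof. intros Hc u l Hu Hl. apply (Hc (fun n => (hzero, u n)) (hzero, l)); auto.
  intros eps He. destruct (Hl eps He) as [N HN]. exists N. intros n Hn.
  eapply Rle_lt_trans. apply (pnorm_le_sum X). simpl.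
  replace (hsub hzero hzero) with (@hzero X) by vsolve. rewrite norm0. specialize (HN n Hn). lra.
Qed.
Lemma gsubR R : is_subspace X R -> gsub (X2H X) (fun p => R (fst p) (snd p)).
Proof. intros [H0 [Ha Hs]]. split; [auto|split]; intros; simpl; auto. Qed.
Lemma gclosedR R : is_closed X R -> gclosed (X2H X) (fun p => R (fst p) (snd p)).
Proof. intros Hc u l Hu Hl. exact (Hc u l Hu Hl). Qed.

Lemma opart R x f : closed_subspace X R -> R x f ->
  exists f', Tpart X R x f' /\ R hzero (hsub f f') /\ hnorm f' <= hnorm f.
Proof.
  intros [HR Hcl] Hf.
  destruct (proj_exists X _ (gsub0 R HR) (gclosed0 R Hcl)) as [Q HQ].
  pose proof (gsub0 R HR) as G0.
  exists (hsub f (Q f)). split; [split|split].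
  - replace x with (hsub x hzero) by vsolve. apply rs_sub; auto. apply (pj_in _ _ Q G0 HQ).
  - intros y g [-> Hg]. unfold pinner; simpl. rewrite inner0r, (pj_orth _ _ Q G0 HQ); auto. csolve.
  - replace (hsub f (hsub f (Q f))) with (Q f) by vsolve. apply (pj_in _ _ Q G0 HQ).
  - apply (cpj_norm _ _ Q G0 HQ).
Qed.

Lemma Tpart_unique R x f1 f2 : is_subspace X R -> Tpart X R x f1 -> Tpart X R x f2 -> f1 = f2.
Proof.
  intros HR H1 H2. apply sub_eq0. apply hinner_def.
  assert (Hm : R hzero (hsub f1 f2)).
  { replace hzero with (hsub x x) by vsolve. apply rs_sub; auto; apply Tpart_in; auto. }
  rewrite inner_sub_l, (Tpart_orth R x f1 _ H1 Hm), (Tpart_orth R x f2 _ H2 Hm). csolve.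
Qed.

Lemma RL R lam y : is_subspace X R -> hermitian X R -> in_resolvent X lam R ->
  (forall x, dom X R x -> hinner y x = C0) -> R hzero y.
Proof.
  intros HR Hh [_ [Hsurj _]] Hy.
  destruct (Hsurj y) as [z [f [Hzf Ey]]].
  assert (Hz : z = hzero).
  { apply hinner_def.
    assert (Hyz : hinner y z = C0) by (apply Hy; exists f; auto).
    assert (Ef : f = hsub (hscal lam z) y) by (rewrite Ey; vsolve).
    destruct (Req_dec (snd lam) 0) as [Hl|Hl].
    - destruct (Hsurj z) as [x [h [Hxh Ez]]].
      pose proof (Hh z f Hzf x h Hxh) as E1.
      assert (Hyx : hinner y x = C0) by (apply Hy; exists h; auto).
      assert (E2 : hinner f x = Cmult lam (hinner z x)).
      { rewrite Ef, inner_sub_l, hinner_scal_l, Hyx. destruct (Cmult lam (hinner z x)). csolve. }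
      rewrite Ez at 2. rewrite inner_sub_r, inner_scal_r, <- E1, E2.
      destruct lam as [l1 l2]. simpl in Hl. subst l2. destruct (hinner z x). csolve.
    - pose proof (Hh z f Hzf z f Hzf) as E1.
      rewrite Ef in E1 at 1. rewrite inner_sub_l, hinner_scal_l, Hyz in E1.
      rewrite (hinner_conj f z) in E1.
      rewrite Ef in E1. rewrite inner_sub_l, hinner_scal_l, Hyz in E1.
      pose proof (inner_im0 _ z) as Im. destruct (hinner z z) as [r i]. simpl in Im. subst i.
      destruct lam as [l1 l2]. unfold Cmult, Cplus, Copp, C0, Cconj in E1. simpl in *.
      injection E1; intros. assert (Hm : l2 * r = 0) by lra.
      apply Rmult_integral in Hm. destruct Hm; [contradiction|]. subst. reflexivity. }
  subst z. replace y with (hscal (Copp C1) f) by (rewrite Ey; vsolve).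
  replace hzero with (hscal (Copp C1) (@hzero X)) by vsolve. apply rs_scal; auto.
Qed.

Lemma herm_orth R g x : hermitian X R -> R hzero g -> dom X R x -> hinner g x = C0.
Proof. intros Hh Hg [f Hf]. rewrite (Hh _ _ Hg x f Hf). apply inner0l. Qed.

End RelL.


Lemma conv_ext (Y : Hilbert) (u v : nat -> Y) l : (forall n, u n = v n) -> conv Y u l -> conv Y v l.
Proof. intros E H eps He. destruct (H eps He) as [N HN]. exists N. intros. rewrite <- E. auto. Qed.

Lemma pconv_of (X : Hilbert) (u1 u2 : nat -> X) l1 l2 : conv X u1 l1 -> conv X u2 l2 ->
  pconv X (fun n => (u1 n, u2 n)) (l1, l2).
Proof.
  intros H1 H2 eps He. destruct (H1 (eps/2)) as [N1 K1]; [lra|]. destruct (H2 (eps/2)) as [N2 K2]; [lra|].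
  exists (max N1 N2). intros n Hn. eapply Rle_lt_trans. apply (pnorm_le_sum X). simpl.
  specialize (K1 n ltac:(lia)). specialize (K2 n ltac:(lia)). lra.
Qed.

Section Main.
Set Default Proof Using "All".
Variable X : Hilbert.
Variables T S A : rel X.
Hypothesis HT : closed_subspace X T.
Hypothesis HS : closed_subspace X S.
Hypothesis HA : closed_subspace X A.
Hypothesis hT : hermitian X T.
Hypothesis hS : hermitian X S.
Hypothesis Hdom : forall x, dom X T x <-> dom X S x.
Hypothesis HdA : forall x, dom X T x -> dom X A x.
Hypothesis Heq : rel_eq X T (rel_sum X S A).
Hypothesis HM : forall g, T hzero g <-> S hzero g.

Lemma sumT x g a : S x g -> A x a -> T x (hadd g a).
Proof. intros. apply Heq. exists g, a. auto. Qed.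
Lemma A0T m : A hzero m -> T hzero m.
Proof. intro. rewrite <- (add0l _ m). apply sumT; auto. apply rs_0. apply HS. Qed.
Lemma domSA x : dom X S x -> dom X A x.
Proof. intro. apply HdA. apply Hdom. auto. Qed.
Lemma Tdiff x f g : T x f -> T x g -> T hzero (hsub f g).
Proof. intros. replace hzero with (hsub x x) by vsolve. apply rs_sub; auto. apply HT. Qed.
Lemma Msub f g : T hzero f -> T hzero g -> T hzero (hsub f g).
Proof. apply Tdiff. Qed.

Lemma decomp Q x s t a : gproj X (fun g => T hzero g) Q ->
  Tpart X S x s -> Tpart X T x t -> A x a -> s = hsub t (hsub a (Q a)).
Proof.
  intros HQ Hs Ht Ha. pose proof (gsub0 _ T (proj1 HT)) as G0.
  set (w := hsub a (Q a)).
  set (z := hsub (hadd s w) t).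
  assert (Zm : T hzero z).
  { replace z with (hsub (hsub (hadd s a) t) (Q a)) by (unfold z, w; vsolve).
    apply Msub. apply (Tdiff x). apply sumT; auto. apply Tpart_in; auto. apply Tpart_in; auto.
    apply (pj_in _ _ Q G0 HQ). }
  assert (Zo : forall m, T hzero m -> hinner z m = C0).
  { intros m Hm. unfold z, w. rewrite inner_sub_l, hinner_add_l.
    rewrite (Tpart_orth _ S x s m Hs) by (apply HM; auto).
    rewrite (Tpart_orth _ T x t m Ht) by auto.
    rewrite (pj_orth _ _ Q G0 HQ) by auto. csolve. }
  assert (z = hzero) by (apply hinner_def; apply Zo; auto).
  unfold z in H. apply sub_eq0 in H. rewrite <- H. vsolve.
Qed.

Lemma RB : rel_compact X (Tpart X A) (Tpart X S) ->
  exists C, 0 <= C /\ forall x s t, Tpart X S x s -> Tpart X T x t ->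
    hnorm s <= C * (hnorm x + hnorm t).
Proof.
  intros [_ Hrc]. apply NNPP; intro Hn.
  assert (Hseq : forall n : nat, exists p : X * X * X,
     Tpart X S (fst (fst p)) (snd (fst p)) /\ Tpart X T (fst (fst p)) (snd p) /\
     hnorm (snd (fst p)) > (INR n + 1) * (hnorm (fst (fst p)) + hnorm (snd p))).
  { intro n. apply NNPP; intro H'. apply Hn. exists (INR n + 1). split.
    pose proof (pos_INR n); lra.
    intros x s t Hs Ht. apply Rnot_lt_le. intro Hlt. apply H'. exists (x, s, t). simpl. auto. }
  destruct (seq_choice _ Hseq) as [xs Hxs].
  set (x := fun n => fst (fst (xs n))). set (s := fun n => snd (fst (xs n))).
  set (t := fun n => snd (xs n)).
  assert (Hsp : forall n, 0 < hnorm (s n)).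
  { intro n. destruct (Hxs n) as [_ [_ Hl]]. fold (x n) (s n) (t n) in Hl.
    pose proof (norm_ge0 _ (x n)). pose proof (norm_ge0 _ (t n)). pose proof (pos_INR n). nra. }
  set (r := fun n => / hnorm (s n)).
  set (x' := fun n => hscal (rs (r n)) (x n)). set (s' := fun n => hscal (rs (r n)) (s n)).
  set (t' := fun n => hscal (rs (r n)) (t n)).
  assert (Hr : forall n, 0 < r n) by (intro; apply Rinv_0_lt_compat; auto).
  assert (Hs' : forall n, Tpart X S (x' n) (s' n)) by (intro n; apply Tpart_scal; [apply HS|apply Hxs]).
  assert (Ht' : forall n, Tpart X T (x' n) (t' n)) by (intro n; apply Tpart_scal; [apply HT|apply Hxs]).
  assert (Ns' : forall n, hnorm (s' n) = 1).
  { intro n. unfold s'. rewrite norm_rs, Rabs_right by (left; apply Hr). unfold r. field.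
    specialize (Hsp n). lra. }
  assert (Nxt : forall n, hnorm (x' n) + hnorm (t' n) <= / (INR n + 1)).
  { intro n. unfold x', t'. rewrite !norm_rs, !Rabs_right by (left; apply Hr).
    destruct (Hxs n) as [_ [_ Hl]]. fold (x n) (s n) (t n) in Hl.
    specialize (Hsp n). unfold r. pose proof (pos_INR n).
    apply (Rmult_le_reg_l (hnorm (s n) * (INR n + 1))). nra.
    replace (hnorm (s n) * (INR n + 1) * (/ hnorm (s n) * hnorm (x n) + / hnorm (s n) * hnorm (t n)))
      with ((INR n + 1) * (hnorm (x n) + hnorm (t n))) by (field; lra).
    replace (hnorm (s n) * (INR n + 1) * / (INR n + 1)) with (hnorm (s n)) by (field; lra). lra. }
  destruct (seq_choice (fun n a => Tpart X A (x' n) a)) as [a' Ha'].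
  { intro n. destruct (domSA (x' n)) as [f Hf]. exists (s' n). apply Tpart_in; auto.
    destruct (opart _ A _ _ HA Hf) as [f' [Hf' _]]. eauto. }
  destruct (Hrc x' s' a' 2 Hs' Ha') as [phi [l [Hphi Hl]]].
  { intro n. rewrite Ns'. specialize (Nxt n). pose proof (norm_ge0 _ (t' n)).
    assert (/ (INR n + 1) <= 1). { rewrite <- Rinv_1. apply Rinv_le_contravar. lra.
      pose proof (pos_INR n). lra. } lra. }
  destruct (proj_exists X _ (gsub0 _ T (proj1 HT)) (gclosed0 _ T (proj2 HT))) as [Q HQ].
  pose proof (gsub0 _ T (proj1 HT)) as G0.
  assert (Dec : forall n, s' n = hsub (t' n) (hsub (a' n) (Q (a' n)))).
  { intro n. apply (decomp Q (x' n)); auto. apply Tpart_in; auto. }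
  assert (Ct : conv X (fun n => t' (phi n)) hzero).
  { apply (conv_subseq _ t'); auto. apply conv_small0. intro n. specialize (Nxt n).
    pose proof (norm_ge0 _ (x' n)). lra. }
  assert (Cx : conv X (fun n => x' (phi n)) hzero).
  { apply (conv_subseq _ x'); auto. apply conv_small0. intro n. specialize (Nxt n).
    pose proof (norm_ge0 _ (t' n)). lra. }
  assert (Ca : conv X (fun n => hsub (a' (phi n)) (Q (a' (phi n)))) (hsub l (Q l))).
  { apply (conv_lip X X (fun a => hsub a (Q a)) 1); [lra| |auto].
    intros; apply (cpj_lip _ _ Q G0 HQ). }
  set (sg := hsub hzero (hsub l (Q l))).
  assert (Cs : conv X (fun n => s' (phi n)) sg).
  { eapply conv_ext. intro n. symmetry. apply Dec. apply conv_sub; auto. }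
  assert (Ssg : S hzero sg).
  { apply (proj2 HS (fun n => (x' (phi n), s' (phi n))) (hzero, sg)).
    intro n. apply Tpart_in. apply Hs'. apply pconv_of; auto. }
  assert (sg = hzero).
  { apply hinner_def. assert (Msg : T hzero sg) by (apply HM; auto).
    unfold sg at 1. rewrite inner_sub_l, inner0l, (pj_orth _ _ Q G0 HQ) by auto. csolve. }
  rewrite H in Cs. destruct (Cs (1/2)) as [N HN]; [lra|]. specialize (HN N (le_n N)).
  replace (hsub (s' (phi N)) hzero) with (s' (phi N)) in HN by vsolve. rewrite Ns' in HN. lra.
Qed.

End Main.


Lemma pair_eq {A B : Type} (p q : A * B) : fst p = fst q -> snd p = snd q -> p = q.
Proof. destruct p, q; simpl; intros; subst; reflexivity. Qed.

Section Main1.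
Set Default Proof Using "All".
Variable X : Hilbert.
Variables T S A : rel X.
Hypothesis HT : closed_subspace X T.
Hypothesis HS : closed_subspace X S.
Hypothesis HA : closed_subspace X A.
Hypothesis hT : hermitian X T.
Hypothesis hS : hermitian X S.
Hypothesis Hdom : forall x, dom X T x <-> dom X S x.
Hypothesis HdA : forall x, dom X T x -> dom X A x.
Hypothesis Heq : rel_eq X T (rel_sum X S A).
Hypothesis HM : forall g, T hzero g <-> S hzero g.

Let Y := X2H X.
Let domSA' := domSA X T S A HT HS HA hT hS Hdom HdA Heq HM.
Let sumT' := sumT X T S A HT HS HA hT hS Hdom HdA Heq HM.
Let A0T' := A0T X T S A HT HS HA hT hS Hdom HdA Heq HM.
Let Tdiff' := Tdiff X T S A HT HS HA hT hS Hdom HdA Heq HM.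

Lemma nY (p : Y) : hnorm p = sqrt (fst (pin2 X p p)). Proof. reflexivity. Qed.
Lemma ipY (p : Y) : ip p p = ip (fst p) (fst p) + ip (snd p) (snd p). Proof. reflexivity. Qed.

Lemma F_lip (P : Y -> Y) C : gsub Y C -> gproj Y C P ->
  forall a b : X, hnorm (hsub (hsub ((hzero, a) : Y) (P (hzero, a))) (hsub ((hzero, b) : Y) (P (hzero, b))))
    <= 1 * hnorm (hsub a b).
Proof.
  intros HC HP a b. rewrite (cpj_sub Y C P HC HP). eapply Rle_trans. apply (cpj_norm Y C P HC HP).
  rewrite Rmult_1_l. change (hsub ((hzero, a) : Y) (hzero, b)) with ((hsub hzero hzero, hsub a b) : Y).
  eapply Rle_trans. apply (pnorm_le_sum X). simpl.
  replace (hsub hzero hzero) with (@hzero X) by vsolve. rewrite norm0. lra.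
Qed.

Lemma part1 : rel_compact X (Tpart X A) (Tpart X S) -> compact_perturbation X T S.
Proof.
  intro Hrc. destruct (RB X T S A HT HS HA hT hS Hdom HdA Heq HM Hrc) as [Cb [Cb0 HRB]].
  destruct Hrc as [_ Hrc].
  pose proof (gsubR X T (proj1 HT)) as GT. pose proof (gsubR X S (proj1 HS)) as GS.
  destruct (proj_exists Y _ GT (gclosedR X T (proj2 HT))) as [PT HPT].
  destruct (proj_exists Y _ GS (gclosedR X S (proj2 HS))) as [PS HPS].
  exists PT, PS. split; [exact HPT|split; [exact HPS|]].
  change (gcompact Y (fun p => hsub (PT p) (PS p))).
  assert (CB : gcompact Y (fun p => hsub (PS p) (PT (PS p)))).
  { intros u B Hu. set (w := fun n => PS (u n)).
    assert (Hw : forall n, S (fst (w n)) (snd (w n))) by (intro; apply (pj_in Y _ PS GS HPS)).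
    assert (Nw : forall n, hnorm (w n) <= B).
    { intro n. eapply Rle_trans. apply (pj_norm Y _ PS GS HPS). apply Hu. }
    destruct (seq_choice (fun n s => Tpart X S (fst (w n)) s /\ hnorm s <= hnorm (snd (w n)))) as [s Hs].
    { intro n. destruct (opart X S _ _ HS (Hw n)) as [f' [H1 [_ H3]]]. eauto. }
    destruct (seq_choice (fun n a => Tpart X A (fst (w n)) a)) as [a Ha].
    { intro n. destruct (domSA' (fst (w n))) as [f Hf]. exists (snd (w n)); auto.
      destruct (opart X A _ _ HA Hf) as [f' [H1 _]]. eauto. }
    destruct (Hrc (fun n => fst (w n)) s a (2 * B)) as [phi [l [Hphi Hl]]].
    { intro n; apply Hs. }
    { intro n; apply Ha. }
    { intro n. destruct (Hs n) as [_ Hsn]. pose proof (pnorm_ge_fst X (w n)). pose proof (pnorm_ge_snd X (w n)).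
      rewrite <- nY in *. pose proof (Nw n). lra. }
    set (F := fun z : X => hsub (hsub ((hzero, z) : Y) (PT (hzero, z))) hzero).
    set (G := fun z : X => hsub (@hzero Y) (hsub ((hzero, z) : Y) (PT (hzero, z)))).
    assert (Id : forall n, hsub (w n) (PT (w n)) = G (a n)).
    { intro n. set (t := ((fst (w n), hadd (snd (w n)) (a n)) : Y)).
      assert (Ct : T (fst t) (snd t)). { unfold t; simpl. apply sumT'. apply Hw. apply Tpart_in. apply Ha. }
      assert (E : w n = hsub t (hzero, a n)).
      { apply pair_eq; simpl; vsolve. }
      rewrite E. rewrite <- (cpj_sub Y _ PT GT HPT). rewrite (cpj_fix Y _ PT GT HPT t Ct). reflexivity. }
    exists phi, (G l). split; auto.
    eapply conv_ext. intro n. symmetry. apply Id.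
    apply (conv_lip X Y G 1); [lra| |auto].
    intros b c. unfold G. replace (hsub (hsub (@hzero Y) (hsub ((hzero, b) : Y) (PT (hzero, b))))
        (hsub (@hzero Y) (hsub ((hzero, c) : Y) (PT (hzero, c)))))
      with (@hopp Y (hsub (hsub ((hzero, b) : Y) (PT (hzero, b))) (hsub ((hzero, c) : Y) (PT (hzero, c)))))
      by vsolve.
    rewrite norm_opp. apply (F_lip PT _ GT HPT). }
  assert (CA : gcompact Y (fun p => hsub (PT p) (PS (PT p)))).
  { intros u B Hu. set (w := fun n => PT (u n)).
    assert (Hw : forall n, T (fst (w n)) (snd (w n))) by (intro; apply (pj_in Y _ PT GT HPT)).
    assert (Nw : forall n, hnorm (w n) <= B).
    { intro n. eapply Rle_trans. apply (pj_norm Y _ PT GT HPT). apply Hu. }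
    destruct (seq_choice (fun n (ga : (X * X)%type) => S (fst (w n)) (fst ga) /\ A (fst (w n)) (snd ga) /\ snd (w n) = hadd (fst ga) (snd ga))) as [ga Hga].
    { intro n. destruct (proj1 (Heq _ _) (Hw n)) as [g [a [H1 [H2 H3]]]]. exists (g, a). auto. }
    destruct (seq_choice (fun n a' => Tpart X A (fst (w n)) a' /\ A hzero (hsub (snd (ga n)) a'))) as [a' Ha'].
    { intro n. destruct (Hga n) as [_ [H2 _]]. destruct (opart X A _ _ HA H2) as [f' [H4 [H5 _]]]. eauto. }
    destruct (seq_choice (fun n t => Tpart X T (fst (w n)) t /\ hnorm t <= hnorm (snd (w n)))) as [t Ht].
    { intro n. destruct (opart X T _ _ HT (Hw n)) as [f' [H1 [_ H3]]]. eauto. }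
    destruct (seq_choice (fun n s => Tpart X S (fst (w n)) s)) as [s Hs].
    { intro n. destruct (Hga n) as [H1 _]. destruct (opart X S _ _ HS H1) as [f' [H4 _]]. eauto. }
    destruct (Hrc (fun n => fst (w n)) s a' ((1 + Cb) * (2 * B))) as [phi [l [Hphi Hl]]].
    { intro n; apply Hs. }
    { intro n; apply Ha'. }
    { intro n. pose proof (HRB _ _ _ (Hs n) (proj1 (Ht n))). destruct (Ht n) as [_ Htn].
      pose proof (pnorm_ge_fst X (w n)). pose proof (pnorm_ge_snd X (w n)).
      rewrite <- nY in *. pose proof (Nw n). pose proof (norm_ge0 _ (fst (w n))).
      pose proof (norm_ge0 _ (t n)).
      assert (Cb * (hnorm (fst (w n)) + hnorm (t n)) <= Cb * (2 * B)) by (apply Rmult_le_compat_l; lra).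
      nra. }
    set (G := fun z : X => hsub ((hzero, z) : Y) (PS (hzero, z))).
    assert (Id : forall n, hsub (w n) (PS (w n)) = G (a' n)).
    { intro n. destruct (Hga n) as [H1 [H2 H3]]. destruct (Ha' n) as [H4 H5].
      set (m := hsub (snd (ga n)) (a' n)).
      set (t0 := ((fst (w n), hadd (fst (ga n)) m) : Y)).
      assert (Ct : S (fst t0) (snd t0)).
      { unfold t0; simpl. replace (fst (w n)) with (hadd (fst (w n)) hzero) by vsolve.
        apply rs_add; auto. apply HS. apply HM. apply A0T'. auto. }
      assert (E : w n = hadd t0 (hzero, a' n)).
      { apply pair_eq; simpl. vsolve. rewrite H3. unfold m. vsolve. }
      rewrite E. unfold G. rewrite (pj_add Y _ PS GS HPS). rewrite (pj_fix Y _ PS GS HPS t0 Ct). vsolve. }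
    exists phi, (G l). split; auto.
    eapply conv_ext. intro n. symmetry. apply Id.
    apply (conv_lip X Y G 1); [lra| |auto].
    intros b c. apply (F_lip PS _ GS HPS). }
  pose proof (Ltrick Y _ PT _ PS GT HPT GS HPS CB) as CL.
  apply (gc_ext Y (fun p => hsub (hsub (PT p) (PS (PT p))) (PS (hsub p (PT p))))).
  { intro p. rewrite (pj_sub Y _ PS GS HPS). vsolve. }
  apply gc_sub; auto.
Qed.
End Main1.


Section Main2.
Set Default Proof Using "All".
Variable X : Hilbert.
Variables T S A : rel X.
Hypothesis HT : closed_subspace X T.
Hypothesis HS : closed_subspace X S.
Hypothesis HA : closed_subspace X A.
Hypothesis hT : hermitian X T.
Hypothesis hS : hermitian X S.
Hypothesis Hdom : forall x, dom X T x <-> dom X S x.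
Hypothesis HdA : forall x, dom X T x -> dom X A x.
Hypothesis Heq : rel_eq X T (rel_sum X S A).
Hypothesis HM : forall g, T hzero g <-> S hzero g.

Let Y := X2H X.
Let domSA' := domSA X T S A HT HS HA hT hS Hdom HdA Heq HM.
Let sumT' := sumT X T S A HT HS HA hT hS Hdom HdA Heq HM.
Let Tdiff' := Tdiff X T S A HT HS HA hT hS Hdom HdA Heq HM.

Let X1 := orth_of_T0 X T.

Lemma gsubX1 : gsub X X1.
Proof.
  split; [|split].
  - intros g _. apply inner0l.
  - intros x y Hx Hy g Hg. rewrite hinner_add_l, Hx, Hy by auto. csolve.
  - intros a x Hx g Hg. rewrite hinner_scal_l, Hx by auto. csolve.
Qed.

Lemma domX1 x : dom X T x -> X1 x.
Proof. intros Hd g Hg. rewrite (hinner_conj g x), (herm_orth X T g x hT Hg Hd). csolve. Qed.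

Lemma part2 : compact_perturbation X T S ->
   reduces X (orth_of_T0 X T) S -> reduces X (orth_of_T0 X T) A ->
   bounded_on_dom X (Tpart X T) ->
   rel_compact X (Tpart X A) (Tpart X S).
Proof.
  intros [PT [PS [HPT [HPS Hc]]]] _ [P0 [HP0 HredA]] [Cb HCb].
  change (Y -> Y) in PT. change (Y -> Y) in PS.
  change (gcompact Y (fun p : Y => @hsub Y (PT p) (PS p))) in Hc.
  change (gproj Y (fun p : Y => T (fst p) (snd p)) PT) in HPT.
  change (gproj Y (fun p : Y => S (fst p) (snd p)) PS) in HPS.
  change (gproj X X1 P0) in HP0.
  pose proof (gsubR X T (proj1 HT)) as GT. pose proof (gsubR X S (proj1 HS)) as GS.
  pose proof gsubX1 as G1.
  split.
  { intros x [f Hf]. destruct (domSA' x) as [a Ha]. exists f. apply Tpart_in; auto.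
    destruct (opart X A _ _ HA Ha) as [a' [Ha' _]]. exists a'; auto. }
  intros x y g M0 Hy Hg HM0.
  assert (St1 : forall n, X1 (g n)).
  { intro n. assert (Dx : dom X T (x n)) by (apply Hdom; exists (y n); apply Tpart_in; auto).
    assert (Px : P0 (x n) = x n) by (apply (pj_fix X X1 P0 G1 HP0); apply domX1; auto).
    pose proof (HredA _ _ (Tpart_in _ _ _ _ (Hg n))) as H1. rewrite Px in H1.
    assert (Ad : A hzero (hsub (g n) (P0 (g n)))).
    { replace hzero with (hsub (x n) (x n)) by vsolve. apply rs_sub; auto. apply HA. apply Tpart_in; auto. }
    set (d := hsub (g n) (P0 (g n))) in *.
    assert (d = hzero).
    { apply hinner_def. unfold d at 1. rewrite inner_sub_l.
      rewrite (hinner_conj d (P0 (g n))).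
      rewrite (Tpart_orth X A _ _ _ (Hg n) Ad).
      unfold d. rewrite (pj_orth X X1 P0 G1 HP0) by (apply (pj_in X X1 P0 G1 HP0)). csolve. }
    apply sub_eq0 in H. rewrite H. apply (pj_in X X1 P0 G1 HP0). }
  assert (St2 : forall n, exists t, Tpart X T (x n) t /\ g n = hsub t (y n)).
  { intro n. assert (Tx : T (x n) (hadd (y n) (g n))) by (apply sumT'; apply Tpart_in; auto).
    destruct (opart X T _ _ HT Tx) as [t [Ht _]]. exists t. split; auto.
    set (z := hsub (hadd (y n) (g n)) t).
    assert (Zm : T hzero z) by (apply (Tdiff' (x n)); auto; apply Tpart_in; auto).
    assert (z = hzero).
    { apply hinner_def. unfold z at 1. rewrite inner_sub_l, hinner_add_l.
      rewrite (Tpart_orth X S _ _ _ (Hy n)) by (apply HM; auto).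
      rewrite (Tpart_orth X T _ _ _ Ht) by auto. rewrite (St1 n) by auto. csolve. }
    apply sub_eq0 in H. rewrite <- H. vsolve. }
  set (u := fun n => ((x n, y n) : Y)).
  destruct (Hc u M0) as [phi [L [Hphi HL]]].
  { intro n. eapply Rle_trans. apply (pnorm_le_sum X). apply HM0. }
  set (G := fun z : X => hsub ((hzero, z) : Y) (PT (hzero, z))).
  assert (Id : forall n, hsub (PT (u n)) (PS (u n)) = G (g n)).
  { intro n. assert (Su : S (fst (u n)) (snd (u n))) by (apply Tpart_in; apply Hy).
    rewrite (pj_fix Y _ PS GS HPS _ Su).
    set (v := ((x n, hadd (y n) (g n)) : Y)).
    assert (Cv : T (fst v) (snd v)). { unfold v; simpl. apply sumT'; apply Tpart_in; [apply Hy|apply Hg]. }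
    assert (E : u n = hsub v (hzero, g n)) by (apply pair_eq; simpl; vsolve).
    assert (E1 : hsub (u n) (PT (u n)) = hsub hzero (G (g n))).
    { rewrite E, <- (cpj_sub Y _ PT GT HPT), (cpj_fix Y _ PT GT HPT v Cv). reflexivity. }
    replace (hsub (PT (u n)) (u n)) with (hsub hzero (hsub (u n) (PT (u n)))) by vsolve.
    rewrite E1. vsolve. }
  set (K := 1 + Rabs Cb).
  assert (St4 : forall z, X1 z -> hnorm z <= K * hnorm (G z)).
  { intros z Hz. set (q := PT (hzero, z)).
    assert (Cq : T (fst q) (snd q)) by (apply (pj_in Y _ PT GT HPT)).
    destruct (opart X T _ _ HT Cq) as [tz [Htz [Hm _]]].
    pose proof (HCb _ _ Htz) as Btz.
    assert (GE : G z = ((hsub hzero (fst q), hsub z (snd q)) : Y)) by reflexivity.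
    assert (N1 : hnorm (fst q) <= hnorm (G z)).
    { pose proof (pnorm_ge_fst X (G z)) as P1. change (sqrt (fst (pin2 X (G z) (G z)))) with (@hnorm Y (G z)) in P1. rewrite GE in P1 at 1. simpl in P1.
      replace (hsub hzero (fst q)) with (hopp (fst q)) in P1 by vsolve. rewrite norm_opp in P1. exact P1. }
    assert (N2 : hnorm (hsub z tz) <= hnorm (G z)).
    { pose proof (pnorm_ge_snd X (G z)) as P1. change (sqrt (fst (pin2 X (G z) (G z)))) with (@hnorm Y (G z)) in P1. rewrite GE in P1 at 1. simpl in P1.
      eapply Rle_trans; [|exact P1]. apply norm_le_sq.
      set (m := hsub (snd q) tz) in *.
      replace (hsub z (snd q)) with (hsub (hsub z tz) m) by (unfold m; vsolve).
      assert (O : ip (hsub z tz) m = 0).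
      { unfold ip. rewrite inner_sub_l, (Hz m Hm), (Tpart_orth X T _ _ _ Htz Hm). unfold Cplus, Copp, C0; simpl; ring. }
      remember (hsub z tz) as r. rewrite !ip_sub_l, !ip_sub_r, (ip_sym _ m r), O.
      pose proof (ip_pos _ m). lra. }
    replace z with (hadd (hsub z tz) tz) at 1 by vsolve.
    eapply Rle_trans. apply tri.
    assert (hnorm tz <= Rabs Cb * hnorm (fst q)).
    { eapply Rle_trans. apply Btz. apply Rmult_le_compat_r. apply norm_ge0. apply Rle_abs. }
    assert (Rabs Cb * hnorm (fst q) <= Rabs Cb * hnorm (G z)) by (apply Rmult_le_compat_l; auto; apply Rabs_pos).
    unfold K. lra. }
  assert (Glin : forall a b, hsub (G a) (G b) = G (hsub a b)).
  { intros a b. unfold G. rewrite (cpj_sub Y _ PT GT HPT). f_equal; f_equal; apply pair_eq; simpl; vsolve. }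
  destruct (cauchy_conv X (fun n => g (phi n))) as [l Hl].
  { intros eps He. assert (K0 : 0 < K) by (unfold K; pose proof (Rabs_pos Cb); lra).
    destruct (conv_cauchy _ _ _ HL (eps / K)) as [N HN]. apply Rdiv_lt_0_compat; lra.
    exists N. intros n m Hn Hm. specialize (HN n m Hn Hm). cbv beta in HN.
    rewrite !Id, Glin in HN.
    eapply Rle_lt_trans. apply St4. apply gsub_sub; auto.
    apply (Rmult_lt_compat_l K) in HN; auto. replace (K * (eps / K)) with eps in HN by (field; lra). lra. }
  exists phi, l. split; auto.
Qed.
End Main2.


Theorem theorem3p4 (X : Hilbert) (T S A : rel X) :
  closed_subspace X T -> closed_subspace X S -> closed_subspace X A ->
  hermitian X T -> hermitian X S -> hermitian X A ->
  (forall x, dom X T x <-> dom X S x) ->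
  (forall x, dom X T x -> dom X A x) ->
  rel_eq X T (rel_sum X S A) ->
  (exists lam : Cplx, in_resolvent X lam T /\ in_resolvent X lam S) ->
  (rel_compact X (Tpart X A) (Tpart X S) -> compact_perturbation X T S) /\
  (compact_perturbation X T S ->
   reduces X (orth_of_T0 X T) S -> reduces X (orth_of_T0 X T) A ->
   bounded_on_dom X (Tpart X T) ->
   rel_compact X (Tpart X A) (Tpart X S)).
Proof.
  intros HT HS HA hT hS hA Hdom HdA Heq [lam [RT RS]].
  assert (HM : forall g, T hzero g <-> S hzero g).
  { intro g. split; intro Hg.
    - apply (RL X S lam g (proj1 HS) hS RS). intros x Hx.
      apply (herm_orth X T g x hT Hg). apply Hdom; auto.
    - apply (RL X T lam g (proj1 HT) hT RT). intros x Hx.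
      apply (herm_orth X S g x hS Hg). apply Hdom; auto. }
  split.
  - apply (part1 X T S A HT HS HA hT hS Hdom HdA Heq HM).
  - apply (part2 X T S A HT HS HA hT hS Hdom HdA Heq HM).
Qed.
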